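(* Let $\alpha>1$. (i) Let $\nu$ be a class (i) or class (ii) distribution with density $f=e^{-\varphi}$, where $f$ is bounded. Let $\eta$ be another distribution with density $g=e^{-\gamma}$. Suppose that $\lim_{x\to\infty}\varphi(x)/\gamma(x)$ exists and that $g/f$ is bounded on every compact interval. Then $\lim_{x\to\infty}\gamma(x)/\varphi(x)>\frac{\alpha-1}{\alpha}$ implies $D_\alpha(\eta|\nu)<\infty$, and $\lim_{x\to\infty}\gamma(x)/\varphi(x)<\frac{\alpha-1}{\alpha}$ implies $D_\alpha(\eta|\nu)=\infty$. (ii) Let $\nu$ be a class (iii) distribution with density $f=e^{-\varphi}$, where $f$ is bounded and $\lim_{x\to\infty}\varphi(x)/\log(x)=c>1$. Let $\eta$ be another distribution with density $g=e^{-\gamma}$. Suppose that $\lim_{x\to\infty}\varphi(x)/\gamma(x)$ exists and that $g/f$ is bounded on every compact interval. Then $\lim_{x\to\infty}\gamma(x)/\varphi(x)>\frac{\alpha-1}{\alpha}+\frac{1}{c\alpha}$ implies $D_\alpha(\eta|\nu)<\infty$, and $\lim_{x\to\infty}\gamma(x)/\varphi(x)<\frac{\alpha-1}{\alpha}+\frac{1}{c\alpha}$ implies $D_\alpha(\eta|\nu)=\infty$.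
   Context: Distributions are probability distributions on $[0,\infty)$ with continuous densities written $f=\exp(-\varphi)$, $g=\exp(-\gamma)$, positive above some threshold. The $\alpha$-divergence ($\alpha>0,\alpha\ne1$) is the $F$-divergence $D_\alpha(\eta|\nu)=\int_0^\infty F(g/f)f\,dx$ with $F(y)=\frac{y^\alpha-1}{\alpha(\alpha-1)}$ (and $+\infty$ if $\eta$ is not absolutely continuous w.r.t. $\nu$). Classes: $\nu$ is class (i) if there is $c>0$ with $\lim_{x\to\infty}\varphi(x)/x>c$. $\nu$ is class (ii) if $\lim_{x\to\infty}\varphi(x)/x=0$, $\lim_{x\to\infty}\varphi(x)/\log x=\infty$, and there exists $\Phi:\mathbb R_+\to\mathbb R$ and $\bar x>0$ such that $\Phi$ is positive, strictly concave, twice differentiable and increasing on $[\bar x,\infty)$, and, with $\Phi^{-1}$ the inverse of $\Phi|_{[\bar x,\infty)}$, $\liminf_{x\to\infty}\Phi^{-1}(\varphi(x))/x>0$ and $\limsup_{x\to\infty}\Phi^{-1}(\varphi(x))/x<\infty$. $\nu$ is class (iii) if $\lim_{x\to\infty}\varphi(x)/\log(x)=c$ for some $c<\infty$. *)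

(* Defs.v *)
From Stdlib Require Import Reals Lra.
Open Scope R_scope.

Inductive ERbar : Type := Fin (r : R) | PInf | MInf.

Definition lim_infty (h : R -> R) (L : ERbar) : Prop :=
  match L with
  | Fin l => forall eps, eps > 0 -> exists M, forall x, x > M -> Rabs (h x - l) < eps
  | PInf => forall A, exists M, forall x, x > M -> h x > A
  | MInf => forall A, exists M, forall x, x > M -> h x < A
  end.

Definition ext_gt (L : ERbar) (r : R) : Prop :=
  match L with Fin l => l > r | PInf => True | MInf => False end.
Definition ext_lt (L : ERbar) (r : R) : Prop :=
  match L with Fin l => l < r | PInf => False | MInf => True end.

Definition improper_int (h : R -> R) (l : R) : Prop :=
  (forall b, 0 <= b -> inhabited (Riemann_integrable h 0 b)) /\
  (forall eps, eps > 0 -> exists M, forall b (pr : Riemann_integrable h 0 b),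
       b >= M -> Rabs (RiemannInt pr - l) < eps).

Definition improper_int_infty (h : R -> R) : Prop :=
  (forall b, 0 <= b -> inhabited (Riemann_integrable h 0 b)) /\
  (forall A, exists M, forall b (pr : Riemann_integrable h 0 b),
       b >= M -> RiemannInt pr > A).

(** Probability density on [0,oo): continuous (WLOG extended continuously to R),
    nonnegative, positive above a threshold, total mass 1. *)
Definition is_density (f : R -> R) : Prop :=
  continuity f /\
  (forall x, 0 <= x -> 0 <= f x) /\
  (exists x0, forall x, x > x0 -> f x > 0) /\
  improper_int f 1.

(** phi with f = exp(-phi) (relevant where f > 0). *)
Definition pot (f : R -> R) (x : R) : R := - ln (f x).

Definition rpow (y a : R) : R := if Rle_dec y 0 then 0 else Rpower y a.

Definition Falpha (alpha y : R) : R := (rpow y alpha - 1) / (alpha * (alpha - 1)).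

(** Integrand of D_alpha(eta | nu) with densities g (eta), f (nu). *)
Definition Dalpha_integrand (alpha : R) (f g : R -> R) (x : R) : R :=
  Falpha alpha (g x / f x) * f x.

Definition Dalpha_finite (alpha : R) (f g : R -> R) : Prop :=
  exists l, improper_int (Dalpha_integrand alpha f g) l.

Definition Dalpha_infinite (alpha : R) (f g : R -> R) : Prop :=
  improper_int_infty (Dalpha_integrand alpha f g).

Definition class_i (f : R -> R) : Prop :=
  exists c, c > 0 /\ exists L, lim_infty (fun x => pot f x / x) L /\ ext_gt L c.

Definition class_ii (f : R -> R) : Prop :=
  lim_infty (fun x => pot f x / x) (Fin 0) /\
  lim_infty (fun x => pot f x / ln x) PInf /\
  exists (Phi : R -> R) (xbar : R), xbar > 0 /\
    (forall x, x >= xbar -> Phi x > 0) /\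
    (forall x y t, x >= xbar -> y >= xbar -> x <> y -> 0 < t < 1 ->
        Phi (t * x + (1 - t) * y) > t * Phi x + (1 - t) * Phi y) /\
    (exists Phi' Phi'' : R -> R, forall x, x > xbar ->
        derivable_pt_lim Phi x (Phi' x) /\ derivable_pt_lim Phi' x (Phi'' x)) /\
    (forall x y, xbar <= x -> x < y -> Phi x < Phi y) /\
    (* liminf Phi^{-1}(phi x)/x > 0 and limsup Phi^{-1}(phi x)/x < oo,
       where Phi^{-1} is the inverse of Phi restricted to [xbar, oo) *)
    (exists a b M, a > 0 /\ forall x, x > M ->
        exists y, y >= xbar /\ Phi y = pot f x /\ a * x <= y <= b * x).

Definition class_iii (f : R -> R) : Prop :=
  exists c, lim_infty (fun x => pot f x / ln x) (Fin c).

(* Main.v *)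
Require Import Defs.
From Stdlib Require Import Reals Lra Classical.
From Coquelicot Require Import Coquelicot.
Open Scope R_scope.


Lemma exp_le x y : x <= y -> exp x <= exp y.
Proof. intros [H|H]; [left; apply exp_increasing; auto| subst; lra]. Qed.

Lemma cpt_ed h z : continuity_pt h z -> forall eps, eps > 0 ->
  exists d, d > 0 /\ forall y, Rabs (y - z) < d -> Rabs (h y - h z) < eps.
Proof.
  intros H eps He. destruct (H eps He) as [d [Hd H']]. exists d; split; auto.
  intros y Hy. destruct (Req_dec y z) as [->|Hne].
  - rewrite Rminus_eq_0, Rabs_R0; auto.
  - apply H'. split. split; [exact I| auto]. simpl. unfold R_dist. auto.
Qed.

Lemma ed_cpt h z : (forall eps, eps > 0 ->
  exists d, d > 0 /\ forall y, Rabs (y - z) < d -> Rabs (h y - h z) < eps) -> continuity_pt h z.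
Proof.
  intros H eps He. destruct (H eps He) as [d [Hd H']]. exists d; split; auto.
  intros y [_ Hy]. simpl in *. unfold R_dist in *. auto.
Qed.

Lemma rpow_nonneg y a : 0 <= rpow y a.
Proof. unfold rpow; destruct Rle_dec; [lra| unfold Rpower; left; apply exp_pos]. Qed.

Lemma rpow_pos_eq y a : 0 < y -> rpow y a = exp (a * ln y).
Proof. intros; unfold rpow; destruct Rle_dec; [lra|reflexivity]. Qed.

Lemma rpow_le_self a y : 1 <= a -> 0 <= y <= 1 -> rpow y a <= y.
Proof.
  intros Ha Hy. unfold rpow; destruct Rle_dec; [lra|].
  unfold Rpower. rewrite <- (exp_ln y) at 2 by lra. apply exp_le.
  assert (ln y <= 0) by (rewrite <- ln_1; apply ln_le; lra). nra.
Qed.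

Lemma rpow_mono a y v : 0 < a -> 0 <= y <= v -> 0 < v -> rpow y a <= exp (a * ln v).
Proof.
  intros Ha Hy Hv. unfold rpow; destruct Rle_dec; [left; apply exp_pos|].
  unfold Rpower. apply exp_le. apply Rmult_le_compat_l; [lra|]. apply ln_le; lra.
Qed.

Definition Qf (alpha : R) (f g : R -> R) (y : R) : R := rpow (g y / f y) alpha * f y.

Lemma Qf_nonneg alpha f g y : 0 <= f y -> 0 <= Qf alpha f g y.
Proof. intros; unfold Qf. apply Rmult_le_pos; auto; apply rpow_nonneg. Qed.

Lemma cont_c f x : continuity f -> continuous f x.
Proof. intros H. apply continuity_pt_filterlim. apply H. Qed.

Lemma Qf_rcont alpha f g z : alpha > 1 -> continuity f -> continuity g ->
  (forall x, 0 <= x -> 0 <= f x) -> (forall x, 0 <= x -> 0 <= g x) ->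
  (forall a b, exists K, forall x, a <= x <= b -> 0 <= x -> g x <= K * f x) ->
  0 <= z ->
  forall eps, eps > 0 -> exists d, d > 0 /\ forall y, 0 <= y -> Rabs (y - z) < d ->
    Rabs (Qf alpha f g y - Qf alpha f g z) < eps.
Proof.
  intros Ha Cf Cg Pf Pg Hb Hz eps He.
  destruct (Rle_lt_dec (f z) 0) as [Fz|Fz].
  - assert (Fz0 : f z = 0) by (specialize (Pf z Hz); lra).
    assert (Qz : Qf alpha f g z = 0) by (unfold Qf; rewrite Fz0; ring).
    destruct (Hb (z - 1) (z + 1)) as [K HK].
    set (K' := Rmax K 1). assert (HK' : 1 <= K') by apply Rmax_r.
    set (C := exp (alpha * ln K')). assert (HC : 0 < C) by apply exp_pos.
    destruct (cpt_ed f z (Cf z) (eps / C)) as [d0 [Hd0 Hd0']].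
    { apply Rdiv_lt_0_compat; lra. }
    exists (Rmin d0 1). split. { apply Rmin_pos; lra. }
    intros y Hy Hyz. rewrite Qz, Rminus_0_r.
    assert (Hy1 : Rabs (y - z) < d0) by (eapply Rlt_le_trans; [apply Hyz| apply Rmin_l]).
    assert (Hy2 : Rabs (y - z) < 1) by (eapply Rlt_le_trans; [apply Hyz| apply Rmin_r]).
    specialize (Hd0' y Hy1). rewrite Fz0, Rminus_0_r in Hd0'.
    pose proof (Pf y Hy) as fy. rewrite Rabs_right in Hd0' by lra.
    rewrite Rabs_right by (apply Rle_ge, Qf_nonneg; auto).
    assert (Hu : rpow (g y / f y) alpha <= C).
    { apply rpow_mono; [lra| |lra]. destruct fy as [fy|fy].
      - split. { apply Rdiv_le_0_compat; auto. }
        assert (g y <= K * f y). { apply HK; auto. apply Rabs_lt_between' in Hy2. lra. }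
        apply Rle_trans with K; [|apply Rmax_l].
        apply Rmult_le_reg_r with (f y); auto. unfold Rdiv. rewrite Rmult_assoc, Rinv_l; lra.
      - rewrite <- fy. unfold Rdiv. rewrite Rinv_0, Rmult_0_r. lra. }
    unfold Qf. apply Rle_lt_trans with (C * f y). { apply Rmult_le_compat_r; lra. }
    apply Rmult_lt_reg_l with (/ C). { apply Rinv_0_lt_compat; lra. }
    rewrite <- Rmult_assoc, Rinv_l by lra. unfold Rdiv in Hd0'. lra.
  - destruct (Rle_lt_dec (g z) 0) as [Gz|Gz].
    + assert (Gz0 : g z = 0) by (specialize (Pg z Hz); lra).
      assert (Qz : Qf alpha f g z = 0).
      { unfold Qf. rewrite Gz0. unfold Rdiv. rewrite Rmult_0_l. unfold rpow.
        destruct Rle_dec; [ring| lra]. }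
      destruct (cpt_ed f z (Cf z) (f z / 2)) as [d1 [Hd1 Hd1']]. { lra. }
      destruct (cpt_ed g z (Cg z) (Rmin eps (f z / 2))) as [d2 [Hd2 Hd2']].
      { apply Rmin_pos; lra. }
      exists (Rmin d1 d2). split. { apply Rmin_pos; lra. }
      intros y Hy Hyz. rewrite Qz, Rminus_0_r.
      assert (Hy1 : Rabs (y - z) < d1) by (eapply Rlt_le_trans; [apply Hyz| apply Rmin_l]).
      assert (Hy2 : Rabs (y - z) < d2) by (eapply Rlt_le_trans; [apply Hyz| apply Rmin_r]).
      specialize (Hd1' y Hy1). specialize (Hd2' y Hy2).
      rewrite Gz0, Rminus_0_r in Hd2'. pose proof (Pg y Hy) as gy.
      rewrite Rabs_right in Hd2' by lra.
      apply Rabs_lt_between' in Hd1'.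
      pose proof (Rmin_l eps (f z / 2)). pose proof (Rmin_r eps (f z / 2)).
      assert (fy : f y > 0) by lra.
      rewrite Rabs_right by (apply Rle_ge, Qf_nonneg; lra).
      assert (Hu : g y / f y <= 1).
      { apply Rmult_le_reg_r with (f y); auto. unfold Rdiv. rewrite Rmult_assoc, Rinv_l; lra. }
      assert (Hu0 : 0 <= g y / f y) by (apply Rdiv_le_0_compat; lra).
      unfold Qf. apply Rle_lt_trans with (g y / f y * f y).
      { apply Rmult_le_compat_r; [lra|]. apply rpow_le_self; lra. }
      unfold Rdiv. rewrite Rmult_assoc, Rinv_l; lra.
    +
      set (E := fun y => exp (alpha * ln (g y * / f y)) * f y).
      assert (CE : continuous E z).
      { unfold E. apply (continuous_mult (fun y => exp (alpha * ln (g y * / f y))) f).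
        - apply continuous_exp_comp.
          apply (continuous_scal_r alpha (fun y => ln (g y * / f y))).
          apply (continuous_comp (fun y => g y * / f y) ln).
          + apply (continuous_mult g (fun y => / f y)); [apply cont_c; auto|].
            apply continuous_Rinv_comp; [apply cont_c; auto| lra].
          + apply continuous_ln. apply Rmult_lt_0_compat; [lra| apply Rinv_0_lt_compat; lra].
        - apply cont_c; auto. }
      apply continuity_pt_filterlim in CE.
      destruct (cpt_ed E z CE eps He) as [d1 [Hd1 Hd1']].
      destruct (cpt_ed f z (Cf z) (f z / 2)) as [d2 [Hd2 Hd2']]. { lra. }
      destruct (cpt_ed g z (Cg z) (g z / 2)) as [d3 [Hd3 Hd3']]. { lra. }
      assert (EQ : forall y, f y > 0 -> g y > 0 -> Qf alpha f g y = E y).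
      { intros y H1 H2. unfold Qf, E. rewrite rpow_pos_eq; [reflexivity|].
        apply Rdiv_lt_0_compat; auto. }
      exists (Rmin d1 (Rmin d2 d3)). split. { repeat apply Rmin_pos; lra. }
      intros y Hy Hyz.
      assert (Hy1 : Rabs (y - z) < d1) by (eapply Rlt_le_trans; [apply Hyz| apply Rmin_l]).
      assert (Hy23 : Rabs (y - z) < Rmin d2 d3) by (eapply Rlt_le_trans; [apply Hyz| apply Rmin_r]).
      assert (Hy2 : Rabs (y - z) < d2) by (eapply Rlt_le_trans; [apply Hy23| apply Rmin_l]).
      assert (Hy3 : Rabs (y - z) < d3) by (eapply Rlt_le_trans; [apply Hy23| apply Rmin_r]).
      specialize (Hd2' y Hy2). specialize (Hd3' y Hy3).
      apply Rabs_lt_between' in Hd2'. apply Rabs_lt_between' in Hd3'.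
      rewrite (EQ y), (EQ z) by lra. auto.
Qed.


Lemma Qf_exRInt alpha f g b : alpha > 1 -> continuity f -> continuity g ->
  (forall x, 0 <= x -> 0 <= f x) -> (forall x, 0 <= x -> 0 <= g x) ->
  (forall a b, exists K, forall x, a <= x <= b -> 0 <= x -> g x <= K * f x) ->
  0 <= b -> ex_RInt (Qf alpha f g) 0 b.
Proof.
  intros Ha Cf Cg Pf Pg Hb Hb0.
  apply (ex_RInt_ext (fun y => Qf alpha f g (Rmax 0 y))).
  { intros x Hx. rewrite Rmin_left, Rmax_right in Hx by lra. rewrite Rmax_right by lra. reflexivity. }
  apply (ex_RInt_continuous (V:=R_CompleteNormedModule)). intros z Hz. rewrite Rmin_left, Rmax_right in Hz by lra.
  apply continuity_pt_filterlim. apply ed_cpt. intros eps He.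
  destruct (Qf_rcont alpha f g z Ha Cf Cg Pf Pg Hb (proj1 Hz) eps He) as [d [Hd H]].
  exists d; split; auto. intros y Hy.
  rewrite (Rmax_right 0 z) by lra. apply H. apply Rmax_l.
  unfold Rmax; destruct Rle_dec.
  - auto.
  - rewrite Rabs_left1 by lra. rewrite Rabs_left1 in Hy; [lra|].
    destruct (Rle_dec (y - z) 0); [auto| lra].
Qed.

Lemma h_eq alpha f g x : alpha > 1 ->
  Dalpha_integrand alpha f g x = scal (/ (alpha * (alpha - 1))) (minus (Qf alpha f g x) (f x)).
Proof.
  intros Ha. unfold Dalpha_integrand, Falpha, Qf. change (scal ?a ?b) with (a * b).
  unfold minus, plus, opp; simpl. field. split; lra.
Qed.


Lemma h_int alpha f g b : alpha > 1 -> continuity f -> continuity g ->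
  (forall x, 0 <= x -> 0 <= f x) -> (forall x, 0 <= x -> 0 <= g x) ->
  (forall a b, exists K, forall x, a <= x <= b -> 0 <= x -> g x <= K * f x) ->
  0 <= b -> ex_RInt (Dalpha_integrand alpha f g) 0 b /\
   RInt (Dalpha_integrand alpha f g) 0 b =
     / (alpha * (alpha - 1)) * (RInt (Qf alpha f g) 0 b - RInt f 0 b).
Proof.
  intros Ha Cf Cg Pf Pg Hb Hb0.
  assert (IQ := Qf_exRInt alpha f g b Ha Cf Cg Pf Pg Hb Hb0).
  assert (IF : ex_RInt f 0 b).
  { apply (ex_RInt_continuous (V:=R_CompleteNormedModule)). intros; apply cont_c; auto. }
  set (k := / (alpha * (alpha - 1))).
  assert (IM : ex_RInt (fun x => scal k (minus (Qf alpha f g x) (f x))) 0 b).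
  { apply (ex_RInt_scal (V:=R_NormedModule)). apply (ex_RInt_minus (V:=R_NormedModule)); auto. }
  assert (EQ : RInt (fun x => scal k (minus (Qf alpha f g x) (f x))) 0 b = k * (RInt (Qf alpha f g) 0 b - RInt f 0 b)).
  { rewrite (RInt_scal (V:=R_CompleteNormedModule)) by (apply (ex_RInt_minus (V:=R_NormedModule)); auto).
    rewrite (RInt_minus (V:=R_CompleteNormedModule)) by auto. reflexivity. }
  split.
  - apply (ex_RInt_ext (V:=R_NormedModule) (fun x => scal k (minus (Qf alpha f g x) (f x)))); auto.
    intros; rewrite h_eq; auto.
  - rewrite <- EQ. apply (RInt_ext (V:=R_CompleteNormedModule)). intros; rewrite h_eq; auto.
Qed.
Lemma RInt_mono Q a b : 0 <= a <= b -> ex_RInt Q 0 b -> (forall x, 0 <= x -> 0 <= Q x) ->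
  RInt Q 0 a <= RInt Q 0 b.
Proof.
  intros Hab HQ Hp.
  rewrite <- (RInt_Chasles (V:=R_CompleteNormedModule) Q 0 a b).
  - change (plus ?x ?y) with (x + y).
    assert (0 <= RInt Q a b). { apply RInt_ge_0; [lra| |]. eapply (ex_RInt_Chasles_2 (V:=R_CompleteNormedModule)); [|apply HQ]; lra.
      intros; apply Hp; lra. } lra.
  - eapply (ex_RInt_Chasles_1 (V:=R_CompleteNormedModule)); [|apply HQ]; lra.
  - eapply (ex_RInt_Chasles_2 (V:=R_CompleteNormedModule)); [|apply HQ]; lra.
Qed.

Lemma split_int Q B b : 0 <= B <= b -> ex_RInt Q 0 b -> RInt Q 0 b = RInt Q 0 B + RInt Q B b.
Proof.
  intros H HQ. rewrite <- (RInt_Chasles (V:=R_CompleteNormedModule) Q 0 B b). reflexivity.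
  - eapply (ex_RInt_Chasles_1 (V:=R_CompleteNormedModule)); [|apply HQ]; lra.
  - eapply (ex_RInt_Chasles_2 (V:=R_CompleteNormedModule)); [|apply HQ]; lra.
Qed.

Lemma ftc_pow d B b : 0 < d -> 1 <= B <= b ->
  is_RInt (fun x => exp (- d * ln x) / x) B b
    (- exp (- d * ln b) / d - - exp (- d * ln B) / d).
Proof.
  intros Hd HB.
  apply (is_RInt_derive (V:=R_CompleteNormedModule) (fun x => - exp (- d * ln x) / d)).
  - intros x Hx. rewrite Rmin_left, Rmax_right in Hx by lra.
    auto_derive. lra. field. split; lra.
  - intros x Hx. rewrite Rmin_left, Rmax_right in Hx by lra.
    apply (ex_derive_continuous (K:=R_AbsRing) (V:=R_NormedModule)). auto_derive. lra.
Qed.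

Lemma ftc_ln B b : 1 <= B <= b -> is_RInt (fun x => / x) B b (ln b - ln B).
Proof.
  intros HB.
  apply (is_RInt_derive (V:=R_CompleteNormedModule) ln).
  - intros x Hx. rewrite Rmin_left, Rmax_right in Hx by lra.
    auto_derive. lra. field. lra.
  - intros x Hx. rewrite Rmin_left, Rmax_right in Hx by lra.
    apply (ex_derive_continuous (K:=R_AbsRing) (V:=R_NormedModule)). auto_derive. lra.
Qed.

Lemma conv_bound Q B d : 1 <= B -> 0 < d -> (forall b, 0 <= b -> ex_RInt Q 0 b) ->
  (forall x, 0 <= x -> 0 <= Q x) -> (forall x, B <= x -> Q x <= exp (- d * ln x) / x) ->
  exists l, forall eps, eps > 0 -> exists M, forall b, b >= M -> Rabs (RInt Q 0 b - l) < eps.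
Proof.
  intros HB Hd HQ Hp Hbd.
  set (U := RInt Q 0 B + exp (- d * ln B) / d).
  assert (Hle : forall b, b >= B -> RInt Q 0 b <= U).
  { intros b Hb. rewrite (split_int Q B b) by (try apply HQ; lra). unfold U.
    assert (RInt Q B b <= exp (- d * ln B) / d); [|lra].
    pose proof (ftc_pow d B b Hd (conj HB (Rge_le _ _ Hb))) as F.
    apply (is_RInt_unique (V:=R_CompleteNormedModule)) in F.
    apply Rle_trans with (RInt (fun x => exp (- d * ln x) / x) B b).
    - apply RInt_le; [lra| |eexists; apply ftc_pow; lra|].
      + eapply (ex_RInt_Chasles_2 (V:=R_CompleteNormedModule)); [|apply (HQ b)]; lra.
      + intros x Hx. apply Hbd. lra.
    - rewrite F. assert (0 < exp (- d * ln b) / d) by (apply Rdiv_lt_0_compat; [apply exp_pos|lra]).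
      unfold Rdiv in *. lra. }
  set (E := fun y => exists b, 0 <= b /\ y = RInt Q 0 b).
  destruct (completeness E) as [l [Hub Hlub]].
  { exists U. intros y [b [Hb ->]]. destruct (Rle_lt_dec B b).
    - apply Hle; lra.
    - apply Rle_trans with (RInt Q 0 B); [apply RInt_mono; [lra| apply HQ; lra| auto]| apply Hle; lra]. }
  { exists (RInt Q 0 0). exists 0; split; auto; lra. }
  exists l. intros eps He.
  assert (Hex : exists b0, 0 <= b0 /\ RInt Q 0 b0 > l - eps).
  { apply NNPP. intros Hn. assert (l <= l - eps); [|lra].
    apply Hlub. intros y [b [Hb ->]]. apply Rnot_lt_le. intros Hc. apply Hn. exists b; split; auto. }
  destruct Hex as [b0 [Hb0 Hb0']].
  exists b0. intros b Hb.
  assert (RInt Q 0 b0 <= RInt Q 0 b) by (apply RInt_mono; [lra| apply HQ; lra| auto]).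
  assert (RInt Q 0 b <= l) by (apply Hub; exists b; split; auto; lra).
  apply Rabs_lt_between'. lra.
Qed.

Lemma div_bound Q B : 1 <= B -> (forall b, 0 <= b -> ex_RInt Q 0 b) ->
  (forall x, 0 <= x -> 0 <= Q x) -> (forall x, B <= x -> / x <= Q x) ->
  forall A, exists M, forall b, b >= M -> RInt Q 0 b > A.
Proof.
  intros HB HQ Hp Hbd A.
  exists (Rmax B (exp (A + ln B) + 1)). intros b Hb.
  pose proof (Rmax_l B (exp (A + ln B) + 1)). pose proof (Rmax_r B (exp (A + ln B) + 1)).
  rewrite (split_int Q B b) by (try apply HQ; lra).
  assert (0 <= RInt Q 0 B) by (apply RInt_ge_0; [lra| apply HQ; lra| intros; apply Hp; lra]).
  assert (ln b - ln B <= RInt Q B b).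
  { rewrite <- (is_RInt_unique (V:=R_CompleteNormedModule) _ _ _ _ (ftc_ln B b (conj HB (Rge_le _ _ (Rge_trans _ _ _ Hb (Rle_ge _ _ H)))))).
    apply RInt_le; [lra| eexists; apply ftc_ln; lra| |].
    - eapply (ex_RInt_Chasles_2 (V:=R_CompleteNormedModule)); [|apply (HQ b)]; lra.
    - intros x Hx. apply Hbd. lra. }
  assert (ln (exp (A + ln B)) < ln b). { apply ln_increasing; [apply exp_pos| lra]. }
  rewrite ln_exp in H3. lra.
Qed.


Lemma Q_exp alpha f g x : f x > 0 -> g x > 0 ->
  Qf alpha f g x = exp ((alpha - 1) * pot f x - alpha * pot g x).
Proof.
  intros Hf Hg. unfold Qf, pot.
  assert (Hu : 0 < g x / f x) by (apply Rdiv_lt_0_compat; lra).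
  rewrite rpow_pos_eq by auto.
  assert (Hg' : g x = g x / f x * f x) by (field; lra).
  assert (Hl : ln (g x) = ln (g x / f x) + ln (f x)).
  { rewrite <- ln_mult by lra. rewrite <- Hg'. reflexivity. }
  rewrite Hl. rewrite <- (exp_ln (f x)) at 2 by lra. rewrite <- exp_plus. f_equal. ring.
Qed.

Lemma exp_recip d x : 0 < x -> exp (- (1 + d) * ln x) = exp (- d * ln x) / x.
Proof.
  intros Hx. replace (- (1 + d) * ln x) with (- d * ln x + - ln x) by ring.
  rewrite exp_plus, exp_Ropp, exp_ln by lra. unfold Rdiv. reflexivity.
Qed.

Lemma int_f f b : is_density f -> 0 <= b -> ex_RInt f 0 b.
Proof.
  intros [Cf _] Hb. apply (ex_RInt_continuous (V:=R_CompleteNormedModule)). intros; apply cont_c; auto.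
Qed.

Lemma f_lim f : is_density f -> forall eps, eps > 0 -> exists M, M >= 0 /\ forall b, b >= M ->
  Rabs (RInt f 0 b - 1) < eps.
Proof.
  intros Hd eps He. destruct Hd as [Cf [Pf [_ [Hi1 Hi2]]]].
  destruct (Hi2 eps He) as [M HM]. exists (Rmax M 0). split. { apply Rle_ge, Rmax_r. }
  intros b Hb. pose proof (Rmax_l M 0). pose proof (Rmax_r M 0).
  destruct (Hi1 b) as [pr]. lra. rewrite (RInt_Reals f 0 b pr). apply HM. lra.
Qed.

Section Crit.
Variables (alpha : R) (f g : R -> R).
Hypothesis Ha : alpha > 1.
Hypothesis Df : is_density f.
Hypothesis Dg : is_density g.
Hypothesis Hb : forall a b, exists K, forall x, a <= x <= b -> 0 <= x -> g x <= K * f x.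

Lemma h_int' b : 0 <= b -> ex_RInt (Dalpha_integrand alpha f g) 0 b /\
   RInt (Dalpha_integrand alpha f g) 0 b =
     / (alpha * (alpha - 1)) * (RInt (Qf alpha f g) 0 b - RInt f 0 b).
Proof.
  destruct Df as [Cf [Pf _]]. destruct Dg as [Cg [Pg _]]. apply h_int; auto.
Qed.

Lemma Q_int b : 0 <= b -> ex_RInt (Qf alpha f g) 0 b.
Proof.
  destruct Df as [Cf [Pf _]]. destruct Dg as [Cg [Pg _]]. apply Qf_exRInt; auto.
Qed.

Lemma Q_pos x : 0 <= x -> 0 <= Qf alpha f g x.
Proof. destruct Df as [Cf [Pf _]]. intros; apply Qf_nonneg; auto. Qed.

Lemma h_inh b : 0 <= b -> inhabited (Riemann_integrable (Dalpha_integrand alpha f g) 0 b).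
Proof. intros H. constructor. apply ex_RInt_Reals_0. apply (h_int' b H). Qed.

Lemma fin_crit : (exists d B, d > 0 /\ forall x, x > B -> f x > 0 /\ g x > 0 /\
     (alpha - 1) * pot f x - alpha * pot g x <= - (1 + d) * ln x) -> Dalpha_finite alpha f g.
Proof.
  intros [d [B [Hd HB]]].
  set (B' := Rmax B 1 + 1). pose proof (Rmax_l B 1). pose proof (Rmax_r B 1).
  assert (Hbnd : forall x, B' <= x -> Qf alpha f g x <= exp (- d * ln x) / x).
  { intros x Hx. destruct (HB x) as [H1 [H2 H3]]. unfold B' in Hx; lra.
    rewrite Q_exp by auto. rewrite <- exp_recip by (unfold B' in Hx; lra). apply exp_le. auto. }
  destruct (conv_bound (Qf alpha f g) B' d ltac:(unfold B'; lra) Hd Q_int Q_pos Hbnd) as [l Hl].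
  set (k := / (alpha * (alpha - 1))).
  assert (Hk : k > 0). { unfold k. apply Rinv_0_lt_compat. nra. }
  exists (k * (l - 1)). split. { apply h_inh. }
  intros eps He. set (e1 := eps / (2 * k)).
  assert (He1 : e1 > 0) by (unfold e1; apply Rdiv_lt_0_compat; lra).
  assert (Heps : eps = 2 * k * e1) by (unfold e1; field; lra).
  destruct (Hl e1 He1) as [M1 HM1]. destruct (f_lim f Df e1 He1) as [M2 [HM2 HM2']].
  exists (Rmax M1 M2). intros b pr Hbm.
  pose proof (Rmax_l M1 M2). pose proof (Rmax_r M1 M2).
  rewrite <- (RInt_Reals _ _ _ pr). rewrite (proj2 (h_int' b ltac:(lra))). fold k.
  specialize (HM1 b ltac:(lra)). specialize (HM2' b ltac:(lra)).
  apply Rabs_lt_between' in HM1. apply Rabs_lt_between' in HM2'.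
  apply Rabs_def1; nra.
Qed.

Lemma inf_crit : (exists B, forall x, x > B -> f x > 0 /\ g x > 0 /\
     - ln x <= (alpha - 1) * pot f x - alpha * pot g x) -> Dalpha_infinite alpha f g.
Proof.
  intros [B HB].
  set (B' := Rmax B 1 + 1). pose proof (Rmax_l B 1). pose proof (Rmax_r B 1).
  assert (Hdiv := div_bound (Qf alpha f g) B' ltac:(unfold B'; lra) Q_int Q_pos).
  assert (Hd : forall x, B' <= x -> / x <= Qf alpha f g x).
  { intros x Hx. destruct (HB x) as [H1 [H2 H3]]. unfold B' in Hx; lra.
    rewrite Q_exp by auto. replace (/ x) with (exp (- ln x)).
    2: { rewrite exp_Ropp, exp_ln by (unfold B' in Hx; lra). reflexivity. }
    apply exp_le. lra. }
  specialize (Hdiv Hd).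
  set (k := / (alpha * (alpha - 1))).
  assert (Hk : k > 0). { unfold k. apply Rinv_0_lt_compat. nra. }
  split. { apply h_inh. }
  intros A. destruct (Hdiv (A / k + 2)) as [M1 HM1]. destruct (f_lim f Df 1 ltac:(lra)) as [M2 [HM2 HM2']].
  exists (Rmax M1 M2). intros b pr Hbm.
  pose proof (Rmax_l M1 M2). pose proof (Rmax_r M1 M2).
  rewrite <- (RInt_Reals _ _ _ pr). rewrite (proj2 (h_int' b ltac:(lra))). fold k.
  specialize (HM1 b ltac:(lra)). specialize (HM2' b ltac:(lra)).
  apply Rabs_lt_between' in HM2'.
  assert (k * (A / k) = A) by (field; lra). nra.
Qed.
End Crit.


Lemma dens_pos f : is_density f -> exists x0, forall x, x > x0 -> f x > 0.
Proof. intros [_ [_ [H _]]]; exact H. Qed.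

Lemma lim_gt h M r : lim_infty h M -> ext_gt M r -> exists m0 B, m0 > r /\ forall x, x > B -> h x > m0.
Proof.
  destruct M as [m| |]; simpl; intros Hl Hg.
  - destruct (Hl ((m - r) / 2) ltac:(lra)) as [B HB]. exists ((m + r) / 2), B. split; [lra|].
    intros x Hx. specialize (HB x Hx). apply Rabs_lt_between' in HB. lra.
  - destruct (Hl (r + 1)) as [B HB]. exists (r + 1), B. split; [lra| auto].
  - contradiction.
Qed.

Lemma lim_lt h M r : lim_infty h M -> ext_lt M r -> exists m1 B, m1 < r /\ forall x, x > B -> h x < m1.
Proof.
  destruct M as [m| |]; simpl; intros Hl Hg.
  - destruct (Hl ((r - m) / 2) ltac:(lra)) as [B HB]. exists ((m + r) / 2), B. split; [lra|].
    intros x Hx. specialize (HB x Hx). apply Rabs_lt_between' in HB. lra.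
  - contradiction.
  - destruct (Hl (r - 1)) as [B HB]. exists (r - 1), B. split; [lra| auto].
Qed.

Lemma ln_lt_self y : 0 < y -> ln y < y.
Proof.
  intros Hy. destruct (Rle_lt_dec (ln y) 0). lra.
  pose proof (exp_ineq1 (ln y) ltac:(lra)). rewrite exp_ln in H by lra. lra.
Qed.

Lemma ln_pos' x : x > 1 -> ln x > 0.
Proof. intros. rewrite <- ln_1. apply ln_increasing; lra. Qed.

Lemma grow f : class_i f \/ class_ii f -> forall A, A > 0 ->
  exists B, forall x, x > B -> x > 1 /\ pot f x > A * ln x.
Proof.
  intros [Hc|Hc] A HA.
  - destruct Hc as [c [Hc [L [HL HLc]]]].
    destruct (lim_gt _ _ _ HL HLc) as [m0 [B0 [Hm0 HB0]]].
    set (t := c / (2 * A)). assert (Ht : t > 0) by (unfold t; apply Rdiv_lt_0_compat; lra).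
    exists (Rmax (Rmax B0 1) (2 * Rabs (A * ln t) / c)).
    intros x Hx. pose proof (Rmax_l (Rmax B0 1) (2 * Rabs (A * ln t) / c)).
    pose proof (Rmax_r (Rmax B0 1) (2 * Rabs (A * ln t) / c)).
    pose proof (Rmax_l B0 1). pose proof (Rmax_r B0 1).
    split; [lra|].
    specialize (HB0 x ltac:(lra)).
    assert (Hp : pot f x > c * x).
    { assert (pot f x = pot f x / x * x) by (field; lra). nra. }
    assert (Hl : ln (t * x) < t * x) by (apply ln_lt_self; nra).
    rewrite ln_mult in Hl by lra.
    assert (HAt : A * t = c / 2) by (unfold t; field; lra).
    assert (Hr : c * x / 2 > Rabs (A * ln t)).
    { assert (x > 2 * Rabs (A * ln t) / c) by lra.
      apply Rmult_gt_compat_l with (r := c / 2) in H3; [|lra].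
      replace (c / 2 * (2 * Rabs (A * ln t) / c)) with (Rabs (A * ln t)) in H3 by (field; lra). lra. }
    pose proof (Rle_abs (- (A * ln t))). rewrite Rabs_Ropp in H3.
    assert (A * ln x < A * (t * x - ln t)) by (apply Rmult_lt_compat_l; lra).
    nra.
  - destruct Hc as [_ [HP _]].
    destruct (HP A) as [M HM]. exists (Rmax M 1). intros x Hx.
    pose proof (Rmax_l M 1). pose proof (Rmax_r M 1).
    split; [lra|]. specialize (HM x ltac:(lra)). pose proof (ln_pos' x ltac:(lra)).
    assert (pot f x = pot f x / ln x * ln x) by (field; lra). nra.
Qed.


Lemma ratio_lb a b m : a > 0 -> b / a > m -> b > m * a.
Proof. intros. assert (b = b / a * a) by (field; lra). nra. Qed.
Lemma ratio_ub a b m : a > 0 -> b / a < m -> b < m * a.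
Proof. intros. assert (b = b / a * a) by (field; lra). nra. Qed.

Lemma lnratio f c e B : lim_infty (fun x => pot f x / ln x) (Fin c) -> e > 0 ->
  exists B', forall x, x > B' -> x > B /\ x > 1 /\ (c - e) * ln x < pot f x < (c + e) * ln x.
Proof.
  intros Hl He. destruct (Hl e He) as [B0 HB0]. exists (Rmax (Rmax B0 B) 1).
  intros x Hx. pose proof (Rmax_l (Rmax B0 B) 1). pose proof (Rmax_r (Rmax B0 B) 1).
  pose proof (Rmax_l B0 B). pose proof (Rmax_r B0 B).
  specialize (HB0 x ltac:(lra)). apply Rabs_lt_between' in HB0.
  pose proof (ln_pos' x ltac:(lra)). split; [lra|]. split; [lra|]. destruct HB0.
  split; [apply ratio_lb| apply ratio_ub]; auto; lra.
Qed.

Theorem proposition3p3 (alpha : R) (halpha : alpha > 1) :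
  (forall f g : R -> R,
     is_density f -> is_density g ->
     (class_i f \/ class_ii f) ->
     (exists K, forall x, 0 <= x -> f x <= K) ->
     (exists L, lim_infty (fun x => pot f x / pot g x) L) ->
     (forall a b, exists K, forall x, a <= x <= b -> 0 <= x -> g x <= K * f x) ->
     forall M, lim_infty (fun x => pot g x / pot f x) M ->
       (ext_gt M ((alpha - 1) / alpha) -> Dalpha_finite alpha f g) /\
       (ext_lt M ((alpha - 1) / alpha) -> Dalpha_infinite alpha f g)) /\
  (forall (f g : R -> R) (c : R),
     is_density f -> is_density g ->
     c > 1 ->
     lim_infty (fun x => pot f x / ln x) (Fin c) ->
     (exists K, forall x, 0 <= x -> f x <= K) ->
     (exists L, lim_infty (fun x => pot f x / pot g x) L) ->
     (forall a b, exists K, forall x, a <= x <= b -> 0 <= x -> g x <= K * f x) ->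
     forall M, lim_infty (fun x => pot g x / pot f x) M ->
       (ext_gt M ((alpha - 1) / alpha + 1 / (c * alpha)) -> Dalpha_finite alpha f g) /\
       (ext_lt M ((alpha - 1) / alpha + 1 / (c * alpha)) -> Dalpha_infinite alpha f g)).
Proof.
  split.
  - intros f g Df Dg Hcl _ _ Hb M HM.
    destruct (dens_pos f Df) as [xf Hxf]. destruct (dens_pos g Dg) as [xg Hxg].
    assert (Hth : alpha * ((alpha - 1) / alpha) = alpha - 1) by (field; lra).
    split.
    + intros HgtM. destruct (lim_gt _ _ _ HM HgtM) as [m0 [B0 [Hm0 HB0]]].
      set (k := alpha * m0 - alpha + 1).
      assert (Hk : k > 0) by (unfold k; nra).
      destruct (grow f Hcl (2 / k) ltac:(apply Rdiv_lt_0_compat; lra)) as [B1 HB1].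
      apply fin_crit; auto.
      exists 1, (Rmax (Rmax B0 B1) (Rmax xf xg)). split; [lra|]. intros x Hx.
      pose proof (Rmax_l (Rmax B0 B1) (Rmax xf xg)). pose proof (Rmax_r (Rmax B0 B1) (Rmax xf xg)).
      pose proof (Rmax_l B0 B1). pose proof (Rmax_r B0 B1).
      pose proof (Rmax_l xf xg). pose proof (Rmax_r xf xg).
      destruct (HB1 x ltac:(lra)) as [Hx1 Hp]. pose proof (ln_pos' x Hx1).
      assert (Hp0 : pot f x > 0) by (assert (2 / k * ln x > 0) by (apply Rmult_lt_0_compat; [apply Rdiv_lt_0_compat|]; lra); lra).
      assert (Hg : pot g x > m0 * pot f x) by (apply ratio_lb; auto; apply HB0; lra).
      split; [apply Hxf; lra|]. split; [apply Hxg; lra|].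
      assert (k * (2 / k) = 2) by (field; lra).
      assert (k * pot f x > 2 * ln x) by nra.
      unfold k in *. nra.
    + intros HltM. destruct (lim_lt _ _ _ HM HltM) as [m1 [B0 [Hm1 HB0]]].
      set (k := alpha - 1 - alpha * m1).
      assert (Hk : k > 0) by (unfold k; nra).
      destruct (grow f Hcl 1 ltac:(lra)) as [B1 HB1].
      apply inf_crit; auto.
      exists (Rmax (Rmax B0 B1) (Rmax xf xg)). intros x Hx.
      pose proof (Rmax_l (Rmax B0 B1) (Rmax xf xg)). pose proof (Rmax_r (Rmax B0 B1) (Rmax xf xg)).
      pose proof (Rmax_l B0 B1). pose proof (Rmax_r B0 B1).
      pose proof (Rmax_l xf xg). pose proof (Rmax_r xf xg).
      destruct (HB1 x ltac:(lra)) as [Hx1 Hp]. pose proof (ln_pos' x Hx1).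
      assert (Hp0 : pot f x > 0) by lra.
      assert (Hg : pot g x < m1 * pot f x) by (apply ratio_ub; auto; apply HB0; lra).
      split; [apply Hxf; lra|]. split; [apply Hxg; lra|].
      assert (k * pot f x > 0) by nra.
      unfold k in *. nra.
  - intros f g c Df Dg Hc Hlc _ _ Hb M HM.
    destruct (dens_pos f Df) as [xf Hxf]. destruct (dens_pos g Dg) as [xg Hxg].
    assert (Hth : alpha * ((alpha - 1) / alpha + 1 / (c * alpha)) = alpha - 1 + 1 / c) by (field; lra).
    assert (Hc1 : c * (1 / c) = 1) by (field; lra).
    split.
    + intros HgtM. destruct (lim_gt _ _ _ HM HgtM) as [m0 [B0 [Hm0 HB0]]].
      set (k := alpha * m0 - alpha + 1).
      assert (Hk1 : k > 1 / c) by (unfold k; nra).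
      assert (Hkc : k * c > 1) by nra.
      assert (Hk : k > 0) by (assert (1 / c > 0) by (apply Rdiv_lt_0_compat; lra); lra).
      assert (Hik : k * (1 / k) = 1) by (field; lra).
      assert (Hik' : 1 / k < c) by nra.
      assert (Hik0 : 1 / k > 0) by (apply Rdiv_lt_0_compat; lra).
      destruct (lnratio f c ((c - 1 / k) / 2) (Rmax (Rmax B0 xf) xg) Hlc ltac:(lra)) as [B1 HB1].
      apply fin_crit; auto.
      exists ((k * c - 1) / 2), B1. split; [lra|]. intros x Hx.
      destruct (HB1 x Hx) as [HxB [Hx1 [Hp Hp']]].
      pose proof (Rmax_l (Rmax B0 xf) xg). pose proof (Rmax_r (Rmax B0 xf) xg).
      pose proof (Rmax_l B0 xf). pose proof (Rmax_r B0 xf).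
      pose proof (ln_pos' x Hx1).
      assert (Hp0 : pot f x > 0) by nra.
      assert (Hg : pot g x > m0 * pot f x) by (apply ratio_lb; auto; apply HB0; lra).
      split; [apply Hxf; lra|]. split; [apply Hxg; lra|].
      assert (k * pot f x > k * ((c - (c - 1 / k) / 2) * ln x)) by nra.
      assert (k * ((c - (c - 1 / k) / 2) * ln x) = (1 + (k * c - 1) / 2) * ln x) by (field; lra).
      unfold k in *. nra.
    + intros HltM. destruct (lim_lt _ _ _ HM HltM) as [m1 [B0 [Hm1 HB0]]].
      set (k := alpha - 1 - alpha * m1).
      assert (Hk1 : k > - (1 / c)) by (unfold k; nra).
      assert (Hkc : k * c > - 1) by nra.
      apply inf_crit; auto.
      destruct (Rle_lt_dec 0 k) as [Hk|Hk].
      * destruct (lnratio f c (c / 2) (Rmax (Rmax B0 xf) xg) Hlc ltac:(lra)) as [B1 HB1].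
        exists B1. intros x Hx.
        destruct (HB1 x Hx) as [HxB [Hx1 [Hp Hp']]].
        pose proof (Rmax_l (Rmax B0 xf) xg). pose proof (Rmax_r (Rmax B0 xf) xg).
        pose proof (Rmax_l B0 xf). pose proof (Rmax_r B0 xf).
        pose proof (ln_pos' x Hx1).
        assert (Hp0 : pot f x > 0) by nra.
        assert (Hg : pot g x < m1 * pot f x) by (apply ratio_ub; auto; apply HB0; lra).
        split; [apply Hxf; lra|]. split; [apply Hxg; lra|].
        assert (k * pot f x >= 0) by nra.
        unfold k in *. nra.
      * set (e := Rmin (c / 2) ((1 + k * c) / (2 * - k))).
        assert (He0 : e > 0). { unfold e. apply Rmin_pos; [lra|]. apply Rdiv_lt_0_compat; lra. }
        assert (He1 : e <= c / 2) by apply Rmin_l.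
        assert (He2 : - k * e <= (1 + k * c) / 2).
        { assert (e <= (1 + k * c) / (2 * - k)) by apply Rmin_r.
          assert (- k * ((1 + k * c) / (2 * - k)) = (1 + k * c) / 2) by (field; lra). nra. }
        destruct (lnratio f c e (Rmax (Rmax B0 xf) xg) Hlc He0) as [B1 HB1].
        exists B1. intros x Hx.
        destruct (HB1 x Hx) as [HxB [Hx1 [Hp Hp']]].
        pose proof (Rmax_l (Rmax B0 xf) xg). pose proof (Rmax_r (Rmax B0 xf) xg).
        pose proof (Rmax_l B0 xf). pose proof (Rmax_r B0 xf).
        pose proof (ln_pos' x Hx1).
        assert (Hp0 : pot f x > 0) by nra.
        assert (Hg : pot g x < m1 * pot f x) by (apply ratio_ub; auto; apply HB0; lra).
        split; [apply Hxf; lra|]. split; [apply Hxg; lra|].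
        assert (k * pot f x > k * ((c + e) * ln x)) by nra.
        assert (k * ((c + e) * ln x) >= - ln x) by nra.
        unfold k in *. nra.
Qed.
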